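(* Let $A,B\in\mathbb R^{\mathcal N\times\mathcal N}$ with $A$ invertible, and assume that among the generalized eigenvalues $\lambda\in\mathbb C$ of $Av=\lambda Bv$ there is a unique positive one $\lambda>0$ of smallest modulus, and that it is simple. Let $u,u^*$, $k$, $M$, $\tilde u^*$, $P$, $P^*$ be as in the context. Let $u_N,u_N^*\in\mathbb R^{\mathcal N}\setminus\{0\}$ and $k_N\in\mathbb R$ be such that $k_N\notin\sigma\big((PMP)|_{[\operatorname{Span}\{\tilde u^*\}]^\perp}\big)$ and $k_N\notin\sigma\big((P^*M^TP^* )|_{[\operatorname{Span}\{u\}]^\perp}\big)$. Define the residuals $R_N=(B-k_NA)u_N$ and $R_N^*=(B^T-k_NA^T)u_N^*$. Then $$\inf_{v\in\operatorname{Span}\{u\}}\|u_N-v\|\le C_N^u\|R_N\|,\qquad \inf_{v^*\in\operatorname{Span}\{u^*\}}\|u_N^*-v^*\|\le C_N^{u^*}\|R_N^*\|,$$ where $C_N^u=\|P(PMP-k_NI)^+PA^{-1}\|$ and $C_N^{u^*}=\|A^{-T}P^*(P^*M^TP^*-k_NI)^+P^*\|$.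
   Context: $\mathbb R^{\mathcal N}$ carries the Euclidean inner product $\langle\cdot,\cdot\rangle$ and norm $\|\cdot\|$; on matrices $\|\cdot\|$ is the induced operator norm. ''Simple'' means $k=1/\lambda$ is an algebraically simple eigenvalue of $M=A^{-1}B$. $u,u^*$ are unit vectors with $Au=\lambda Bu$, $A^Tu^*=\lambda B^Tu^*$; $\tilde u^*=A^Tu^*/\|A^Tu^*\|$; $P=I-\frac{u(\tilde u^* )^T}{\langle u,\tilde u^*\rangle}$, $P^*=I-\frac{\tilde u^*u^T}{\langle u,\tilde u^*\rangle}$ (here $\langle u,\tilde u^*\rangle\ne0$); $\mathbb R^{\mathcal N}=\operatorname{Span}\{u\}\oplus[\operatorname{Span}\{\tilde u^*\}]^\perp=\operatorname{Span}\{\tilde u^*\}\oplus[\operatorname{Span}\{u\}]^\perp$, and $PMP-k_NI$ leaves $[\operatorname{Span}\{\tilde u^*\}]^\perp$ invariant, $P^*M^TP^*-k_NI$ leaves $[\operatorname{Span}\{u\}]^\perp$ invariant. The operator $(PMP-k_NI)^+$ is the linear map equal to the inverse of $(PMP-k_NI)|_{[\operatorname{Span}\{\tilde u^*\}]^\perp}$ on $[\operatorname{Span}\{\tilde u^*\}]^\perp$ and equal to $0$ on $\operatorname{Span}\{u\}$; likewise $(P^*M^TP^*-k_NI)^+$ equals the inverse of $(P^*M^TP^*-k_NI)|_{[\operatorname{Span}\{u\}]^\perp}$ on $[\operatorname{Span}\{u\}]^\perp$ and $0$ on $\operatorname{Span}\{\tilde u^*\}$. $A^{-T}=(A^T)^{-1}$.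 *)

(* Defs.v *)
From HB Require Import structures.
From mathcomp Require Import all_boot all_order all_algebra.
From mathcomp Require Import all_classical all_reals all_analysis.
From mathcomp Require Import complex.
Set Implicit Arguments. Unset Strict Implicit. Unset Printing Implicit Defensive.
Import Order.TTheory GRing.Theory Num.Theory.
Local Open Scope ring_scope.
Local Open Scope classical_set_scope.

Definition dotv (R : realType) (n : nat) (x y : 'cV[R]_n) : R :=
  \sum_i x i 0 * y i 0.
Definition enorm (R : realType) (n : nat) (x : 'cV[R]_n) : R :=
  Num.sqrt (dotv x x).

Definition opnorm (R : realType) (n : nat) (A : 'M[R]_n) : R :=
  sup [set enorm (A *m x) | x in [set x : 'cV[R]_n | enorm x = 1]].

Definition dist_span (R : realType) (n : nat) (u x : 'cV[R]_n) : R :=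
  inf [set enorm (x - a *: u) | a in [set: R]].

Definition gen_eigenvalue (R : realType) (n : nat) (A B : 'M[R]_n) (mu : R[i]) : Prop :=
  \det (map_mx (real_complex R) A - mu *: map_mx (real_complex R) B) = 0.

Definition simple_eigenvalue (R : realType) (n : nat) (M : 'M[R]_n) (k : R) : Prop :=
  mup k (char_poly M) = 1%N.

(* X is the operator S^+ : inverse of S restricted to W = z'^perp on W,
   and 0 on Span{z} *)
Definition is_restricted_pinv (R : realType) (n : nat) (S : 'M[R]_n)
    (zperp z : 'cV[R]_n) (X : 'M[R]_n) : Prop :=
  (forall w : 'cV[R]_n, dotv zperp w = 0 ->
      dotv zperp (X *m w) = 0 /\ S *m (X *m w) = w)
  /\ X *m z = 0.

(* Main.v *)
Require Import Defs.
From HB Require Import structures.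
From mathcomp Require Import all_boot all_order all_algebra.
From mathcomp Require Import all_classical all_reals all_analysis.
From mathcomp Require Import complex.
From mathcomp Require Import ring lra.
Import Order.TTheory GRing.Theory Num.Theory.
Local Open Scope ring_scope.
Local Open Scope classical_set_scope.

Set Implicit Arguments.
Section Norms.
Variable R : realType.
Variable n : nat.
Implicit Types (x y : 'cV[R]_n) (C : 'M[R]_n).

Lemma dotv_ge0 x : 0 <= dotv x x.
Proof. by apply: sumr_ge0 => i _; rewrite -expr2 sqr_ge0. Qed.

Lemma enorm_ge0 x : 0 <= enorm x.
Proof. exact: sqrtr_ge0. Qed.

Lemma dotvZ a x : dotv (a *: x) (a *: x) = a ^+ 2 * dotv x x.
Proof.
rewrite /dotv mulr_sumr; apply: eq_bigr => i _; rewrite !mxE; ring.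
Qed.

Lemma enormZ a x : enorm (a *: x) = `|a| * enorm x.
Proof.
by rewrite /enorm dotvZ sqrtrM ?sqr_ge0 // sqrtr_sqr.
Qed.

Lemma enorm0_eq x : enorm x = 0 -> x = 0.
Proof.
move=> /eqP; rewrite /enorm sqrtr_eq0 => h.
have h0 : dotv x x = 0 by apply/eqP; rewrite eq_le h dotv_ge0.
apply/matrixP => i j; rewrite (ord1 j) mxE.
have hp : forall k : 'I_n, true -> 0 <= x k 0 * x k 0.
  by move=> k _; rewrite -expr2 sqr_ge0.
have := @psumr_eq0P _ _ _ _ hp h0 i isT.
by move=> /eqP; rewrite mulf_eq0 orbb => /eqP.
Qed.

Lemma enorm0 : enorm (0 : 'cV[R]_n) = 0.
Proof. by rewrite /enorm /dotv big1 ?sqrtr0 // => i _; rewrite mxE mul0r. Qed.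

Lemma coord_le x i : x i 0 ^+ 2 <= dotv x x.
Proof.
rewrite /dotv (bigD1 i) //= -expr2 lerDl.
by apply: sumr_ge0 => k _; rewrite -expr2 sqr_ge0.
Qed.

Definition Kb C := \sum_i (\sum_j `|C i j|) ^+ 2.

Lemma unit_bound C x : enorm x = 1 -> enorm (C *m x) <= Num.sqrt (Kb C).
Proof.
move=> hx.
have d1 : dotv x x = 1.
  by rewrite -[dotv x x]sqr_sqrtr ?dotv_ge0 // -/(enorm x) hx expr1n.
have cj : forall j, `|x j 0| <= 1.
  move=> j; have := coord_le x j; rewrite d1 -real_normK ?num_real //.
  by rewrite expr_le1.
apply: ler_wsqrtr; rewrite /dotv /Kb; apply: ler_sum => i _.
have hi : `|(C *m x) i 0| <= \sum_j `|C i j|.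
  rewrite mxE; apply: (le_trans (ler_norm_sum _ _ _)); apply: ler_sum => j _.
  by rewrite normrM -[X in _ <= X]mulr1 ler_wpM2l.
rewrite -expr2 -real_normK ?num_real //.
by rewrite lerXn2r ?nnegrE ?normr_ge0 ?sumr_ge0.
Qed.

Lemma op_bound C y : enorm (C *m y) <= opnorm C * enorm y.
Proof.
have [e0|e0] := eqVneq (enorm y) 0.
  by rewrite (@enorm0_eq y e0) mulmx0 enorm0 mulr0.
have ep : 0 < enorm y by rewrite lt0r e0 enorm_ge0.
set x := (enorm y)^-1 *: y.
have hx : enorm x = 1 by rewrite enormZ ger0_norm ?invr_ge0 ?enorm_ge0 // mulVf.
have hub : has_ubound [set enorm (C *m x) | x in [set x : 'cV[R]_n | enorm x = 1]].
  exists (Num.sqrt (Kb C)) => r [z zh <-]; exact: unit_bound.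
have := ub_le_sup hub (ex_intro2 _ _ x hx erefl).
rewrite -/(opnorm C) /x -scalemxAr enormZ ger0_norm ?invr_ge0 ?enorm_ge0 //.
by rewrite ler_pdivrMl // mulrC.
Qed.

Lemma dist_le u x a : dist_span u x <= enorm (x - a *: u).
Proof.
apply: ge_inf; last by exists a.
by exists 0 => r [b _ <-]; apply: enorm_ge0.
Qed.
End Norms.
Section Alg.
Variable R : realType.
Variable n : nat.
Implicit Types (x y p q : 'cV[R]_n) (C N X : 'M[R]_n).

Lemma trmul x y : x^T *m y = (dotv x y)%:M.
Proof.
apply/matrixP => i j; rewrite (ord1 i) (ord1 j) !mxE /dotv /=.
by apply: eq_bigr => k _; rewrite mxE.
Qed.

Lemma dotvC x y : dotv x y = dotv y x.
Proof. by apply: eq_bigr => i _; rewrite mulrC. Qed.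

Lemma dotvB x y z : dotv x (y - z) = dotv x y - dotv x z.
Proof. rewrite /dotv -sumrB; apply: eq_bigr => i _; rewrite !mxE; ring. Qed.

Lemma outer x y z : x *m y^T *m z = dotv y z *: x.
Proof. by rewrite -mulmxA trmul mul_mx_scalar. Qed.

Lemma dotv_mx q y : dotv q y = (q^T *m y) 0 0.
Proof. by rewrite trmul mxE eqxx mulr1n. Qed.

Lemma key N X p q x (k kN d : R) :
  d != 0 -> N *m p = k *: p -> q^T *m N = k *: q^T -> d = dotv p q ->
  let P := 1%:M - d^-1 *: (p *m q^T) in
  (forall w, dotv q w = 0 -> (P *m N *m P - kN%:M) *m w = 0 -> w = 0) ->
  is_restricted_pinv (P *m N *m P - kN%:M) q p X ->
  P *m X *m P *m ((N - kN%:M) *m x) = x - (d^-1 * dotv q x) *: p.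
Proof.
move=> dn0 Np qN dd P inj [pinv _].
have dd' : d = dotv q p by rewrite dotvC.
have Pp : P *m p = 0.
  by rewrite /P mulmxBl mul1mx -scalemxAl outer scalerA -dd' mulVf // scale1r subrr.
have qP : q^T *m P = 0.
  rewrite /P mulmxBr mulmx1 -scalemxAr mulmxA trmul mul_scalar_mx scalerA.
  by rewrite -dd' mulVf // scale1r subrr.
have PP : P *m P = P.
  by rewrite {1}/P mulmxBl mul1mx -scalemxAl -mulmxA qP mulmx0 scaler0 subr0.
have PN : P *m N = N *m P.
  rewrite /P mulmxBl mulmxBr mul1mx mulmx1 -!scalemxAl -!scalemxAr.
  by rewrite -mulmxA qN mulmxA Np -scalemxAr scalemxAl.
have qPy : forall y, dotv q (P *m y) = 0.
  by move=> y; rewrite dotv_mx mulmxA qP mul0mx mxE.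
set S := P *m N *m P - kN%:M.
set w := P *m x.
set y := P *m ((N - kN%:M) *m x).
have Sw : S *m w = y.
  rewrite /S /w /y mulmxBl -!mulmxA (mulmxA P P) PP (mulmxA N P) -PN -mulmxA (mulmxA P P) PP.
  have -> : (N - kN%:M) *m x = N *m x - kN *: x by rewrite mulmxBl mul_scalar_mx.
  by rewrite (mulmxBr P) mul_scalar_mx scalemxAr.
have [h1 h2] := pinv y (qPy _).
have Xy : X *m y = w.
  apply/eqP; rewrite -subr_eq0; apply/eqP; apply: inj.
    by rewrite dotvB h1 qPy subrr.
  by rewrite mulmxBr h2 Sw subrr.
rewrite -!mulmxA -/y Xy /w mulmxA PP /P mulmxBl mul1mx -scalemxAl outer scalerA.
done.
Qed.
End Alg.

Unset Implicit Arguments.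
Theorem proposition1 (R : realType) (n : nat) (A B : 'M[R]_n) (lambda : R)
  (u us uN usN : 'cV[R]_n) (kN : R) (Xp Xps : 'M[R]_n) :
  A \in unitmx ->
  (* lambda > 0 is the unique generalized eigenvalue of smallest modulus *)
  0 < lambda ->
  gen_eigenvalue A B (real_complex R lambda) ->
  (forall mu : R[i], gen_eigenvalue A B mu -> mu <> (real_complex R lambda) -> (real_complex R lambda) < `|mu|) ->
  let M := invmx A *m B in
  let k := lambda^-1 in
  (* ... and it is simple *)
  simple_eigenvalue M k ->
  (* right and left unit eigenvectors *)
  enorm u = 1 -> A *m u = lambda *: (B *m u) ->
  enorm us = 1 -> A^T *m us = lambda *: (B^T *m us) ->
  let ut := (enorm (A^T *m us))^-1 *: (A^T *m us) in
  let P := 1%:M - (dotv u ut)^-1 *: (u *m ut^T) in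
  let Ps := 1%:M - (dotv u ut)^-1 *: (ut *m u^T) in
  uN != 0 -> usN != 0 ->
  (* kN not in the spectrum of (PMP)|_{ut^perp} nor of (P* M^T P* )|_{u^perp} *)
  (forall w : 'cV[R]_n, dotv ut w = 0 ->
     (P *m M *m P - kN%:M) *m w = 0 -> w = 0) ->
  (forall w : 'cV[R]_n, dotv u w = 0 ->
     (Ps *m M^T *m Ps - kN%:M) *m w = 0 -> w = 0) ->
  (* Xp = (PMP - kN I)^+ , Xps = (P* M^T P* - kN I)^+ *)
  is_restricted_pinv (P *m M *m P - kN%:M) ut u Xp ->
  is_restricted_pinv (Ps *m M^T *m Ps - kN%:M) u ut Xps ->
  let RN := (B - kN *: A) *m uN in
  let RsN := (B^T - kN *: A^T) *m usN in
  dist_span u uN <= opnorm (P *m Xp *m P *m invmx A) * enorm RN /\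
  dist_span us usN <= opnorm (invmx A^T *m Ps *m Xps *m Ps) * enorm RsN.
Proof.
move=> Au lam0 _ _ M k _ nu Aul nus ATus ut P Ps _ _ inj1 inj2 pinv1 pinv2 RN RsN.
have lamn : lambda != 0 by rewrite gt_eqF.
have Mu : M *m u = k *: u.
  have := congr1 (mulmx (invmx A)) Aul.
  rewrite mulKmx // -scalemxAr mulmxA -/M => h.
  by rewrite {2}h scalerA mulVf // scale1r.
set c := (enorm (A^T *m us))^-1.
have utT : ut^T = c *: (us^T *m A).
  by rewrite /ut linearZ /= trmx_mul trmxK.
have usA : us^T *m A = lambda *: (us^T *m B).
  by have := congr1 trmx ATus; rewrite trmx_mul trmxK linearZ /= trmx_mul trmxK.
have utM : ut^T *m M = k *: ut^T.
  rewrite utT -scalemxAl /M mulmxA mulmxK // usA !scalerA; congr (_ *: _).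
  by rewrite /k -mulrA mulrC -mulrA mulfV ?mulr1.
have dn0 : dotv u ut != 0.
  apply/eqP => d0; case: pinv1 => h hz.
  have [_ h2] := h u ltac:(by rewrite dotvC d0).
  move: h2; rewrite hz mulmx0 => u0.
  by move: nu; rewrite -u0 enorm0 => /eqP; rewrite eq_sym oner_eq0.
split.
  have e1 : P *m Xp *m P *m invmx A *m RN = uN - ((dotv u ut)^-1 * dotv ut uN) *: u.
    have -> : P *m Xp *m P *m invmx A *m RN = P *m Xp *m P *m ((M - kN%:M) *m uN).
      rewrite -!mulmxA; congr (_ *m (_ *m (_ *m _))).
      rewrite /RN mulmxA; congr (_ *m _).
      by rewrite mulmxBr -scalemxAr mulVmx // /M scalemx1.
    exact: (key uN dn0 Mu utM erefl inj1 pinv1).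
  apply: (le_trans (dist_le _ u uN ((dotv u ut)^-1 * dotv ut uN))).
  by rewrite -e1 op_bound.
have Mtut : M^T *m ut = k *: ut.
  by rewrite -{1}[ut]trmxK -trmx_mul utM linearZ /= trmxK.
have uMt : u^T *m M^T = k *: u^T.
  by rewrite -trmx_mul Mu linearZ.
have e2 := key (A^T *m usN) dn0 Mtut uMt (dotvC _ _ _) inj2 pinv2.
have RsNe : RsN = (M^T - kN%:M) *m (A^T *m usN).
  rewrite /RsN mulmxA; congr (_ *m _).
  by rewrite mulmxBl -trmx_mul /M mulKVmx // mul_scalar_mx.
have ATu : A^T \in unitmx by rewrite unitmx_tr.
have e3 : invmx A^T *m Ps *m Xps *m Ps *m RsN
          = usN - ((dotv u ut)^-1 * dotv u (A^T *m usN) * c) *: us.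
  rewrite RsNe.
  have -> : invmx A^T *m Ps *m Xps *m Ps *m ((M^T - kN%:M) *m (A^T *m usN)) =
    invmx A^T *m (Ps *m Xps *m Ps *m ((M^T - kN%:M) *m (A^T *m usN))) by rewrite !mulmxA.
  rewrite e2 mulmxBr mulKmx // -scalemxAr /ut -scalemxAr mulKmx //.
  by rewrite scalerA.
apply: (le_trans (dist_le _ us usN ((dotv u ut)^-1 * dotv u (A^T *m usN) * c))).
by rewrite -e3 op_bound.
Qed.
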